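(* Let $G$ be a graph on $\{1,\dots,n\}$, $(S_1,\dots,S_n)$ a realization of $G$, and $w\in\mathbb{R}^n_{\ge0}$. For positive integers $k$ define $\beta(G,w,k)=\max_\rho\sum_{i=1}^nw_i|\operatorname{tr}(\rho S_i)|^k$, maximum over density matrices $\rho$. Then $\lim_{k\to\infty}\beta(G,w,k)=\alpha(G,w)$.
   Context: A realization of $G$ is a tuple of Pauli strings (tensor products of matrices from $\{I,X,Y,Z\}$) of common length with $S_i,S_j$ anticommuting iff $i\sim j$ in $G$ and commuting otherwise. $\alpha(G,w)=\max\{\sum_{i\in I}w_i:I\text{ an independent set of }G\}$. *)

(* Defs.v *)
From HB Require Import structures.
From mathcomp Require Import all_boot all_order all_algebra.
From mathcomp Require Import all_classical all_reals all_analysis.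
From mathcomp Require Import complex.
Set Implicit Arguments. Unset Strict Implicit. Unset Printing Implicit Defensive.
Import Order.TTheory GRing.Theory Num.Theory.
Local Open Scope ring_scope.

Definition is_graph (n : nat) (G : rel 'I_n) : Prop :=
  symmetric G /\ irreflexive G.

Definition independent (n : nat) (G : rel 'I_n) (I : {set 'I_n}) : bool :=
  [forall i in I, forall j in I, ~~ G i j].

(* alpha(G,w) = max over independent sets I of sum_{i in I} w_i
   (the empty set is independent and w >= 0, so folding max from 0 is exact) *)
Definition alpha (R : realType) (n : nat) (G : rel 'I_n) (w : 'I_n -> R) : R :=
  \big[Num.max/0]_(I : {set 'I_n} | independent G I) \sum_(i in I) w i.

(* labels: 0 = I, 1 = X, 2 = Y, 3 = Z ; entries indexed by bits (false = 0, true = 1) *)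
Definition pauli_entry (R : rcfType) (a : 'I_4) (x y : bool) : R[i] :=
  match val a with
  | 0 => if x == y then 1 else 0
  | 1 => if x == y then 0 else 1
  | 2 => if x == y then 0 else (if x then 'i%C else - 'i%C)
  | _ => if x == y then (if x then -1 else 1) else 0
  end.

Definition bit (q i : nat) : bool := odd (i %/ 2 ^ q).

(* The Pauli string s_{m-1} (x) ... (x) s_0 as a 2^m x 2^m complex matrix:
   the Kronecker product written out entrywise in the computational basis. *)
Definition pauli_string (R : rcfType) (m : nat) (s : {ffun 'I_m -> 'I_4})
  : 'M[R[i]]_(2 ^ m) :=
  \matrix_(i, j) \prod_(q < m) pauli_entry R (s q) (bit q i) (bit q j).

Definition realization (R : rcfType) (n m : nat) (G : rel 'I_n)
  (S : 'I_n -> {ffun 'I_m -> 'I_4}) : Prop :=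
  forall i j : 'I_n,
    (pauli_string R (S i) *m pauli_string R (S j)
       = - (pauli_string R (S j) *m pauli_string R (S i)) <-> G i j) /\
    (~~ G i j -> pauli_string R (S i) *m pauli_string R (S j)
                 = pauli_string R (S j) *m pauli_string R (S i)).

Definition adjmx (R : rcfType) (p q : nat) (A : 'M[R[i]]_(p, q)) : 'M[R[i]]_(q, p) :=
  (map_mx (@conjc R) A)^T.

Definition psd (R : rcfType) (N : nat) (rho : 'M[R[i]]_N) : Prop :=
  forall v : 'cV[R[i]]_N, 0 <= (adjmx v *m rho *m v) 0 0.

Definition density (R : rcfType) (N : nat) (rho : 'M[R[i]]_N) : Prop :=
  psd rho /\ \tr rho = 1.

(* beta(G,w,k) = max over density matrices rho of sum_i w_i |tr(rho S_i)|^k,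
   expressed as the supremum of the (attained) set of values *)
Definition beta (R : realType) (n m : nat) (S : 'I_n -> {ffun 'I_m -> 'I_4})
  (w : 'I_n -> R) (k : nat) : R :=
  sup [set x : R | exists rho : 'M[R[i]]_(2 ^ m), density rho /\
         x = \sum_(i < n) w i * (Normc.normc (\tr (rho *m pauli_string R (S i)))) ^+ k].

(* Main.v *)
From mathcomp Require Import ring lra.
From mathcomp Require Import zify.
Require Import Defs.
From HB Require Import structures.
From mathcomp Require Import all_boot all_order all_algebra.
From mathcomp Require Import all_classical all_reals all_analysis.
From mathcomp Require Import complex spectral.
Import Order.TTheory GRing.Theory Num.Theory numFieldNormedType.Exports.
Local Open Scope ring_scope.
Lemma bits_sum (m k : nat) :
  k = (\sum_(q < m) bit q k * 2 ^ q + 2 ^ m * (k %/ 2 ^ m))%N.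
Proof.
elim: m => [|m IH]; first by rewrite big_ord0 expn0 mul1n divn1.
rewrite big_ord_recr /= {1}IH -addnA; congr (_ + _)%N.
rewrite /bit {1}(divn_eq (k %/ 2 ^ m) 2) modn2 -divnMA -expnSr expnS.
rewrite mulnDr [(odd _ * _)%N]mulnC addnC; congr (_ + _)%N.
nia.
Qed.

Lemma bits_inj (m i j : nat) : (i < 2 ^ m)%N -> (j < 2 ^ m)%N ->
  (forall q, (q < m)%N -> bit q i = bit q j) -> i = j.
Proof.
move=> hi hj hq.
rewrite (bits_sum m i) (bits_sum m j) !divn_small // !muln0 !addn0.
by apply: eq_bigr => q _; rewrite hq.
Qed.

Lemma sum_bits (V : nmodType) (m : nat) (F : {ffun 'I_m -> bool} -> V) :
  \sum_(k < 2 ^ m) F [ffun q : 'I_m => bit q k] = \sum_f F f.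
Proof.
pose g := fun k : 'I_(2 ^ m) => [ffun q : 'I_m => bit q k].
have ginj : injective g.
  move=> a b /ffunP h; apply: val_inj; apply: (@bits_inj m); rewrite ?ltn_ord //.
  by move=> q qm; have := h (Ordinal qm); rewrite !ffunE => ->.
have Himg : (g @: [set: 'I_(2^m)]) = [set: {ffun 'I_m -> bool}].
  apply/eqP; rewrite eqEcard finset.subsetT card_imset // !cardsT card_ffun card_bool fintype.card_ord.
  by rewrite /= (fintype.card_ord (2^m)).
transitivity (\sum_(k in [set: 'I_(2^m)]) F (g k)).
  by apply: eq_big => [k|k _]; rewrite ?inE.
rewrite -big_imset; last by move=> a b _ _; apply: ginj.
by rewrite Himg; apply: eq_bigl => f; rewrite inE.
Qed.
Section Pauli.
Variable R : rcfType.

Lemma pauli_mul m (s t : {ffun 'I_m -> 'I_4}) i j :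
  (pauli_string R s *m pauli_string R t) i j =
  \prod_(q < m) \sum_(b : bool)
     pauli_entry R (s q) (bit q i) b * pauli_entry R (t q) b (bit q j).
Proof.
rewrite mxE.
pose F := fun f : {ffun 'I_m -> bool} => \prod_(q < m)
     (pauli_entry R (s q) (bit q i) (f q) * pauli_entry R (t q) (f q) (bit q j)).
transitivity (\sum_(k < 2 ^ m) F [ffun q : 'I_m => bit q k]).
  apply: eq_bigr => k _; rewrite !mxE -big_split /=.
  by apply: eq_bigr => q _; rewrite !ffunE.
by rewrite sum_bits bigA_distr_bigA.
Qed.

Lemma pe_sq (a : 'I_4) x y :
  \sum_(b : bool) pauli_entry R a x b * pauli_entry R a b y = (x == y)%:R.
Proof.
rewrite big_bool; case: a => [[|[|[|[|a]]]] ha] //; case: x; case: y;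
  rewrite /pauli_entry /= ?mulr0 ?mul0r ?addr0 ?add0r ?mulr1 ?mul1r //;
  by rewrite ?mulNr ?mulrN ?opprK -?expr2 ?expr1n ?complex.sqr_i ?opprK.
Qed.

Lemma pe_conj (a : 'I_4) x y :
  conjc (pauli_entry R a y x) = pauli_entry R a x y.
Proof.
case: a => [[|[|[|[|a]]]] ha] //; case: x; case: y;
  rewrite /pauli_entry /= ?rmorph0 ?rmorph1 ?rmorphN ?rmorph1 //;
  by apply/eqP; rewrite eq_complex /= ?oppr0 ?opprK ?eqxx.
Qed.

End Pauli.
Section Pauli2.
Variable R : rcfType.

Lemma pauli_sq m (s : {ffun 'I_m -> 'I_4}) :
  pauli_string R s *m pauli_string R s = 1%:M.
Proof.
apply/matrixP => i j; rewrite pauli_mul mxE.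
under eq_bigr do rewrite pe_sq.
case: (eqVneq i j) => [->|nij].
  by rewrite big1 // => q _; rewrite eqxx.
have [q hq] : exists q : 'I_m, bit q i != bit q j.
  apply/existsP; apply: contraNT nij => /existsPn h.
  apply/eqP/val_inj; apply: (@bits_inj m); rewrite ?ltn_ord // => q qm.
  by have := h (Ordinal qm); rewrite negbK => /eqP.
by rewrite (bigD1 q) //= (negbTE hq) mul0r.
Qed.

Lemma pauli_herm m (s : {ffun 'I_m -> 'I_4}) :
  adjmx (pauli_string R s) = pauli_string R s.
Proof.
apply/matrixP => i j; rewrite !mxE rmorph_prod.
by apply: eq_bigr => q _; exact: pe_conj.
Qed.

Lemma adjmx_mul p q r (A : 'M[R[i]]_(p, q)) (B : 'M[R[i]]_(q, r)) :
  adjmx (A *m B) = adjmx B *m adjmx A.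
Proof. by rewrite /adjmx map_mxM trmx_mul. Qed.

Lemma adjmxK p q (A : 'M[R[i]]_(p, q)) : adjmx (adjmx A) = A.
Proof. by apply/matrixP => i j; rewrite !mxE conjcK. Qed.

Lemma adjmxD p q (A B : 'M[R[i]]_(p, q)) : adjmx (A + B) = adjmx A + adjmx B.
Proof. by apply/matrixP => i j; rewrite !mxE rmorphD. Qed.

Lemma adjmxZ p q a (A : 'M[R[i]]_(p, q)) : adjmx (a *: A) = conjc a *: adjmx A.
Proof. by apply/matrixP => i j; rewrite !mxE rmorphM. Qed.

Lemma adjmx_scalar p a : adjmx (a%:M : 'M[R[i]]_p) = (conjc a)%:M.
Proof.
apply/matrixP => i j; rewrite !mxE eq_sym.
by case: (i == j); rewrite ?mulr1n ?mulr0n ?rmorph0.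
Qed.

End Pauli2.
Section Var.
Variable R : rcfType.
Local Notation C := R[i].

Lemma psd_tr_HH N (rho H : 'M[C]_N) : psd rho -> adjmx H = H ->
  0 <= \tr (rho *m (H *m H)).
Proof.
move=> hr hH.
rewrite mulmxA mxtrace_mulC mulmxA /mxtrace; apply: sumr_ge0 => k _.
have -> : (H *m rho *m H) k k = (adjmx (col k H) *m rho *m col k H) 0 0.
  rewrite !mxE; apply: eq_bigr => b _; rewrite !mxE; congr (_ * _).
  apply: eq_bigr => a _; rewrite !mxE; congr (_ * _).
  by rewrite -[in LHS]hH !mxE.
exact: hr.
Qed.

Lemma tr_quad N (rho M : 'M[C]_N) (t c : C) : \tr rho = 1 -> M *m M = c%:M ->
  \tr (rho *m ((t%:M - M) *m (t%:M - M))) = t ^+ 2 + c - t *+ 2 * \tr (rho *m M).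
Proof.
move=> h1 hM.
have -> : (t%:M - M) *m (t%:M - M) = (t ^+ 2)%:M + c%:M - (t *+ 2) *: M.
  rewrite mulmxBl !mulmxBr hM !mul_scalar_mx mul_mx_scalar scale_scalar_mx.
  rewrite -expr2 mulr2n scalerDl; set u := t *: M.
  by rewrite opprB opprD addrACA.
rewrite mulmxBr mulmxDr !mul_mx_scalar -scalemxAr raddfB raddfD /= !mxtraceZ h1.
by rewrite !mulr1.
Qed.

End Var.
Section Var2.
Variable R : rcfType.
Local Notation C := R[i].
Local Open Scope complex_scope.

Lemma var_bound N (rho M : 'M[C]_N) (c : R) : density rho -> adjmx M = M ->
  M *m M = (c%:C)%:M -> exists a : R, \tr (rho *m M) = a%:C /\ a ^+ 2 <= c.
Proof.
move=> [hp h1] hM hMM.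
have key (t : C) : conjc t = t -> 0 <= t ^+ 2 + c%:C - t *+ 2 * \tr (rho *m M).
  move=> ht; rewrite -(@tr_quad _ _ _ _ t _ h1 hMM); apply: psd_tr_HH => //.
  by rewrite adjmxD adjmx_scalar ht -scaleN1r adjmxZ hM rmorphN rmorph1 scaleN1r.
have k1 := key 1 (rmorph1 _).
have kN1 := key (-1) ltac:(by rewrite rmorphN rmorph1).
set z := \tr (rho *m M) in k1 kN1 *.
rewrite expr1n in k1.
have {kN1} kN1 : 0 <= 1 + c%:C + 2 * z.
  move: kN1; rewrite sqrrN expr1n mulNrn mulNr opprK.
  by [].
have zr : z \is Num.real.
  have r1 := ger0_real k1; have r2 := ger0_real kN1.
  have -> : z = ((1 + c%:C + 2 * z) - (1 + c%:C - 2 * z)) / 4 by field.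
  apply: realM; [exact: realB | rewrite realV; exact: realn].
have [a za] : exists a : R, z = a%:C by apply/complex_realP.
exists a; split => //.
have := key a%:C (conjc_real _); rewrite -/z za -rmorphXn -rmorphMn -rmorphM.
rewrite -!rmorphD -rmorphB lecR.
move=> h; nra.
Qed.
End Var2.
Section Bounds.
Variable R : rcfType.
Local Notation C := R[i].
Local Open Scope complex_scope.

Lemma normc_real (a : R) : Normc.normc (a%:C) = `|a|.
Proof. by rewrite /Normc.normc /= expr0n /= addr0 sqrtr_sqr. Qed.

Lemma one_C N : (1%:M : 'M[C]_N) = ((1 : R)%:C)%:M.
Proof. by rewrite rmorph1. Qed.

Lemma single_bound m (rho : 'M[C]_(2 ^ m)) (s : {ffun 'I_m -> 'I_4}) :
  density rho -> exists a : R, \tr (rho *m pauli_string R s) = a%:C /\ a ^+ 2 <= 1.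
Proof.
move=> hr; apply: var_bound => //; first exact: pauli_herm.
by rewrite pauli_sq one_C.
Qed.

Lemma x_le1 m (rho : 'M[C]_(2 ^ m)) (s : {ffun 'I_m -> 'I_4}) :
  density rho -> Normc.normc (\tr (rho *m pauli_string R s)) <= 1.
Proof.
move=> /(@single_bound _ _ s) [a [-> ha]]; rewrite normc_real.
rewrite -(ler_pXn2r (n:=2)) ?nnegrE ?normr_ge0 // expr1n real_normK ?num_real //.
Qed.

Lemma pair_bound m (rho : 'M[C]_(2 ^ m)) (s t : {ffun 'I_m -> 'I_4}) :
  density rho ->
  pauli_string R s *m pauli_string R t = - (pauli_string R t *m pauli_string R s) ->
  Normc.normc (\tr (rho *m pauli_string R s)) ^+ 2 +
  Normc.normc (\tr (rho *m pauli_string R t)) ^+ 2 <= 1.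
Proof.
move=> hr hst.
have [a [ha _]] := @single_bound _ _ s hr.
have [b [hb _]] := @single_bound _ _ t hr.
rewrite ha hb !normc_real !real_normK ?num_real //.
set A := pauli_string R s; set B := pauli_string R t.
pose M := a%:C *: A + b%:C *: B.
have hM : adjmx M = M.
  by rewrite /M adjmxD !adjmxZ !conjc_real !pauli_herm.
have hMM : M *m M = ((a ^+ 2 + b ^+ 2)%:C)%:M.
  rewrite /M mulmxDl !mulmxDr -!scalemxAl -!scalemxAr !scalerA.
  rewrite /A /B !pauli_sq hst -/A -/B.
  rewrite scalerN addrA [X in X + _ = _]addrAC -addrA [b%:C * a%:C]mulrC subrr addr0.
  rewrite !scale_scalar_mx !mulr1 -!rmorphM rmorphD -!expr2.
  by apply/matrixP => i j; rewrite !mxE mulrnDl.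
have [c [hc hc2]] := @var_bound _ _ _ _ _ hr hM hMM.
move: hc; rewrite /M mulmxDr -!scalemxAr raddfD /= !mxtraceZ -/A -/B ha hb.
rewrite -!rmorphM -rmorphD => /complexI hc.
rewrite -hc -expr2 in hc2. 
have h0 : 0 <= a * a + b * b by nra.
nra.
Qed.

End Bounds.
Section Lower.
Variable R : rcfType.
Local Notation C := R[i].
Local Open Scope complex_scope.

Lemma conj_mul_ge0 (z : C) : 0 <= conjc z * z.
Proof. by rewrite mulrC -sqr_normc exprn_ge0 ?normr_ge0. Qed.

Lemma normc_ge0 (z : C) : 0 <= Normc.normc z.
Proof. by case: z => a b; rewrite /Normc.normc sqrtr_ge0. Qed.

Lemma adjmx_col_ge0 p (y : 'M[C]_(p, 1)) : 0 <= (adjmx y *m y) 0 0.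
Proof.
rewrite mxE; apply: sumr_ge0 => k _; rewrite !mxE; exact: conj_mul_ge0.
Qed.

Lemma row_norm_gt0 p (v : 'rV[C]_p) : v != 0 -> 0 < (v *m adjmx v) 0 0.
Proof.
move=> vn0; rewrite lt_def; apply/andP; split; last first.
  rewrite mxE; apply: sumr_ge0 => k _; rewrite !mxE mulrC; exact: conj_mul_ge0.
apply: contra vn0; rewrite mxE => /eqP /psumr_eq0P h.
apply/eqP/matrixP => i j.
rewrite (ord1 i) [RHS]mxE.
have h' : forall k, v 0 k * (adjmx v) k 0 = 0.
  move=> k; apply: h => // l _; by rewrite !mxE mulrC conj_mul_ge0.
have := h' j.
rewrite !mxE mulrC => /eqP; rewrite mulf_eq0 => /orP [/eqP|/eqP] //.
by move/(f_equal conjc); rewrite conjcK rmorph0.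
Qed.

Lemma normc_sq1 (l : C) : l * l = 1 -> Normc.normc l = 1.
Proof.
move=> h; have := Normc.normcM l l; rewrite h Normc.normc1 => h1.
have := normc_ge0 l; move: (Normc.normc l) h1 => x h1 hx; nra.
Qed.

Lemma lower_state n m (G : rel 'I_n) (S : 'I_n -> {ffun 'I_m -> 'I_4})
  (I : {set 'I_n}) : realization R G S -> independent G I ->
  exists rho : 'M[C]_(2 ^ m), density rho /\
    forall i, i \in I -> Normc.normc (\tr (rho *m pauli_string R (S i))) = 1.
Proof.
move=> hreal hind.
pose As := [seq pauli_string R (S i) | i <- enum I].
have hcomm : {in As &, forall A B, comm_mx A B}.
  move=> A B /mapP [i hi ->] /mapP [j hj ->]; rewrite /comm_mx.
  rewrite mem_enum in hi; rewrite mem_enum in hj.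
  apply: (proj2 (hreal i j)).
  by move/forallP: hind => /(_ i) /implyP /(_ hi) /forallP /(_ j) /implyP /(_ hj).
have [v vn0 /allP vst] := common_eigenvector (expn_gt0 2 m) hcomm.
set s := (v *m adjmx v) 0 0.
have s_gt0 : 0 < s by apply: row_norm_gt0.
exists (s^-1 *: (adjmx v *m v)); split; first split.
- move=> u; rewrite -scalemxAr -scalemxAl mxE mulmxA -adjmx_mul -mulmxA.
  apply: mulr_ge0; [by rewrite invr_ge0 ltW | exact: adjmx_col_ge0].
- rewrite mxtraceZ mxtrace_mulC /mxtrace big_ord1 -/s mulVf //.
  by rewrite gt_eqF.
move=> i hi.
have := vst (pauli_string R (S i)) (map_f _ _); rewrite mem_enum => /(_ hi).
move=> /sub_rVP [l hl].
have hl2 : l * l = 1.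
  have : v = (l * l) *: v.
    by rewrite -scalerA -hl scalemxAl -hl -mulmxA pauli_sq mulmx1.
  move/eqP; rewrite -subr_eq0 -{1}[v]scale1r -scalerBl scaler_eq0 (negbTE vn0) orbF.
  by rewrite subr_eq0 eq_sym => /eqP.
rewrite -scalemxAl mxtraceZ -mulmxA mxtrace_mulC hl -scalemxAl mxtraceZ.
rewrite /mxtrace big_ord1 -/s mulrCA mulVf ?gt_eqF // mulr1.
exact: normc_sq1.
Qed.

End Lower.
Lemma le_alpha (R : realType) n (G : rel 'I_n) (w : 'I_n -> R) (T : {set 'I_n}) :
  independent G T -> \sum_(i in T) w i <= alpha G w.
Proof. by move=> hT; rewrite /alpha (bigD1 T) //= le_max lexx. Qed.

Lemma sum_sub_le (R : realType) n (F : 'I_n -> R) (P : pred 'I_n) :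
  (forall i, 0 <= F i) -> \sum_(i | P i) F i <= \sum_i F i.
Proof.
move=> hF; rewrite [X in _ <= X](bigID P) /= lerDl.
by apply: sumr_ge0 => i _.
Qed.

Local Open Scope classical_set_scope.
Local Open Scope ring_scope.

Theorem proposition2 (R : realType) (n m : nat) (G : rel 'I_n)
  (S : 'I_n -> {ffun 'I_m -> 'I_4}) (w : 'I_n -> R) :
  is_graph G -> realization R G S -> (forall i, 0 <= w i) ->
  (fun k : nat => beta S w k.+1) @ \oo --> alpha G w.
Proof.
move=> [Gsym Girr] hreal hw.
set al := alpha G w.
set W := \sum_i w i.
pose E (k : nat) := [set y : R | exists rho : 'M[R[i]]_(2 ^ m), density rho /\
         y = \sum_(i < n) w i * (Normc.normc (\tr (rho *m pauli_string R (S i)))) ^+ k].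
have bE k : beta S w k = sup (E k) by [].
have hne k : E k !=set0.
  have [rho [hr _]] := @lower_state R n m G S finset.set0 hreal
    ltac:(by apply/forallP => i; rewrite inE).
  by exists (\sum_(i < n) w i * (Normc.normc (\tr (rho *m pauli_string R (S i)))) ^+ k), rho.
have hup k (rho : 'M[R[i]]_(2 ^ m)) : density rho ->
    \sum_(i < n) w i * (Normc.normc (\tr (rho *m pauli_string R (S i)))) ^+ k.+1
    <= al + W * (3 / 4) ^+ k.
  move=> hr.
  pose x i := Normc.normc (\tr (rho *m pauli_string R (S i))).
  have x0 i : 0 <= x i by apply: normc_ge0.
  have x1 i : x i <= 1 by apply: x_le1.
  pose T := finset (fun i => 3 / 4 < x i).
  have Tind : independent G T.
    apply/forallP => i; apply/implyP => hi; apply/forallP => j; apply/implyP => hj.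
    apply/negP => gij.
    have := @pair_bound _ _ _ _ _ hr ((proj1 (hreal i j)).2 gij).
    rewrite !inE in hi hj; rewrite -/(x i) -/(x j).
    move: (x i) (x j) hi hj => a b ha hb; nra.
  rewrite (bigID (mem T)) /=; apply: lerD.
    apply: (le_trans _ (@le_alpha _ _ _ _ _ Tind)); apply: ler_sum => i _.
    rewrite -[leRHS]mulr1; apply: ler_wpM2l => //; exact: exprn_ile1 (x0 i) (x1 i).
  rewrite /W mulr_suml; apply: (le_trans _ (@sum_sub_le _ _ _ (fun i => i \notin T) _)); last first.
    by move=> i; apply: mulr_ge0 => //; apply: exprn_ge0.
  apply: ler_sum => i hi; apply: ler_wpM2l => //.
  have hx : x i <= 3 / 4 by move: hi; rewrite inE -leNgt.
  have hxk : x i ^+ k.+1 <= (3 / 4) ^+ k.+1.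
    by rewrite ler_pXn2r // nnegrE ?x0 //; lra.
  apply: (le_trans hxk).
  rewrite exprSr; apply: ler_piMr; [apply: exprn_ge0 |]; lra.
have hub k : ubound (E k.+1) (al + W * (3 / 4) ^+ k).
  by move=> y [rho [hr ->]]; apply: hup.
have hsup k : has_sup (E k.+1) by split; [exact: hne | exists (al + W * (3 / 4) ^+ k); exact: hub].
have hI k (I : {set 'I_n}) : independent G I -> \sum_(i in I) w i <= beta S w k.+1.
  move=> hind; have [rho [hr h1]] := @lower_state R n m G S I hreal hind.
  rewrite bE; apply: (le_trans _ (sup_upper_bound (hsup k) _)); last first.
    by exists rho; split.
  apply: (le_trans _ (@sum_sub_le _ _ _ (mem I) _)); last first.
    by move=> i; apply: mulr_ge0 => //; apply: exprn_ge0; apply: normc_ge0.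
  by apply: ler_sum => i hi; rewrite h1 // expr1n mulr1.
have hlow k : al <= beta S w k.+1.
  rewrite /al /alpha; elim/big_ind: _ => [| a b ha hb | I hind].
  - by have := hI k finset.set0 ltac:(by apply/forallP => i; rewrite inE); rewrite big_set0.
  - by rewrite ge_max ha hb.
  - exact: hI.
have hbeta k : beta S w k.+1 <= al + W * (3 / 4) ^+ k.
  by rewrite bE; apply: ge_sup; [exact: hne | exact: hub].
apply: (@squeeze_cvgr _ _ _ _ (fun=> al) (fun k => al + W * (3 / 4) ^+ k)).
- by apply: nearW => k; rewrite hlow hbeta.
- exact: cvg_cst.
- rewrite -[X in _ --> X]addr0 -[X in _ --> _ + X](mulr0 W).
  apply: cvgD; first exact: cvg_cst.
  apply: cvgMr; apply: cvg_expr.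
  by rewrite ger0_norm // ltr_pdivrMr // mul1r ltr_nat.
Qed.
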